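(* Let $(Q,\mathbf z)$ be a weak scaffold for $\pi_\bullet$. Then the modified tropical Plücker vector $\bar\pi_\bullet$ lies in $\mathrm{Dr}(k,n)(\mathbb Z)$, i.e. it is a tropical Plücker vector with all coordinates integers.
   Context: $Q$ is a finite loopless directed graph with $\mathbf z=(z_1,\dots,z_n)\in V(Q)^n$; directed distance $\delta$ uses cost 1 forwards and $k-1$ backwards along an edge (assumed finite, and $\delta(v,w)=1,\delta(w,v)=k-1$ for each edge $v\to w$). Its tropical Plücker vector is $\pi_I=-\frac1k\min_{x}\sum_{i\in I}\delta(x,z_i)$, $I\in\binom{[n]}k$. A coloring is $c:V(Q)\to\mathbb Z/k$ with $c(w)=c(v)+1$ for edges $v\to w$. $(Q,\mathbf z)$ is a weak scaffold for $\pi_\bullet$ if $\pi_\bullet$ is its tropical Plücker vector, $\pi_\bullet\in\mathrm{Dr}(k,n)$ (for all $S\in\binom{[n]}{k-2}$, $a<b<c<d\notin S$, $\min(\pi_{Sab}+\pi_{Scd},\pi_{Sac}+\pi_{Sbd},\pi_{Sad}+\pi_{Sbc})$ attained twice), and $Q$ admits a coloring $c$ (fixed). Identifying $\mathbb Z/k$ with $\{0,\dots,k-1\}$, the modified vector is $\bar\pi_I=\pi_I+\frac1k\sum_{i\in I}c(z_i)$. *)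

(* Defs.v *)
From HB Require Import structures.
From mathcomp Require Import all_boot all_order all_algebra.
Unset Printing Implicit Defensive.
Import Order.TTheory GRing.Theory Num.Theory.
Local Open Scope ring_scope.

Section Scaffold.
Variable V : finType.

(* The quiver Q: vertex set V, arrows given by the relation e (v -> w iff e v w). *)

(* wcost e k v w c : there is a walk from v to w in the underlying undirected
   graph of Q whose cost is c, where traversing an arrow forwards costs 1 and
   backwards costs k-1. *)
Inductive wcost (e : rel V) (k : nat) : V -> V -> nat -> Prop :=
| wc_nil v : wcost e k v v 0
| wc_fwd u v w c : e u v -> wcost e k v w c -> wcost e k u w (1 + c)%N
| wc_bwd u v w c : e v u -> wcost e k v w c -> wcost e k u w (k.-1 + c)%N.

(* d is the directed distance delta (finite everywhere): d v w is the minimal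
   cost of a walk from v to w. *)
Definition is_dir_dist (e : rel V) (k : nat) (d : V -> V -> nat) : Prop :=
  forall v w, wcost e k v w (d v w) /\ (forall c, wcost e k v w c -> (d v w <= c)%N).

(* min_x sum_{i in I} delta(x, z_i)  (the initial value of the fold is the
   maximum, so that this is the genuine minimum over the vertices). *)
Definition min_sum (n : nat) (d : V -> V -> nat) (z : 'I_n -> V) (I : {set 'I_n}) : nat :=
  \big[minn/ (\max_(x : V) \sum_(i in I) d x (z i))%N]_(x : V) (\sum_(i in I) d x (z i))%N.

Definition trop_plucker (k n : nat) (d : V -> V -> nat) (z : 'I_n -> V)
  (I : {set 'I_n}) : rat :=
  - (k%:R)^-1 * (min_sum n d z I)%:R.

(* coloring c : V -> Z/k (identified with {0,...,k-1}), c(w) = c(v) + 1 on arrows *)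
Definition is_coloring (e : rel V) (k : nat) (c : V -> 'I_k) : Prop :=
  forall v w, e v w -> nat_of_ord (c w) = ((c v + 1) %% k)%N.

End Scaffold.

Definition min_attained_twice (x y z : rat) : bool :=
  let m := Num.min x (Num.min y z) in
  (2 <= (x == m) + (y == m) + (z == m))%N.

Definition in_Dr (k n : nat) (p : {set 'I_n} -> rat) : Prop :=
  forall (S : {set 'I_n}) (a b c d : 'I_n),
    (#|S| + 2)%N = k ->
    (a < b)%N -> (b < c)%N -> (c < d)%N ->
    a \notin S -> b \notin S -> c \notin S -> d \notin S ->
    min_attained_twice
      (p (a |: (b |: S)) + p (c |: (d |: S)))
      (p (a |: (c |: S)) + p (b |: (d |: S)))
      (p (a |: (d |: S)) + p (b |: (c |: S))).

Definition in_Dr_Z (k n : nat) (p : {set 'I_n} -> rat) : Prop :=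
  in_Dr k n p /\ (forall I : {set 'I_n}, #|I| = k -> p I \is a Num.int).

Definition weak_scaffold (V : finType) (e : rel V) (k n : nat) (z : 'I_n -> V)
  (d : V -> V -> nat) (p : {set 'I_n} -> rat) (c : V -> 'I_k) : Prop :=
  (forall v, ~~ e v v) /\
  is_dir_dist V e k d /\
  (forall v w, e v w -> d v w = 1%N /\ d w v = k.-1) /\
  (forall I : {set 'I_n}, #|I| = k -> p I = trop_plucker V k n d z I) /\
  in_Dr k n p /\
  is_coloring V e k c.

Definition modified_plucker (V : finType) (k n : nat) (z : 'I_n -> V)
  (p : {set 'I_n} -> rat) (c : V -> 'I_k) (I : {set 'I_n}) : rat :=
  p I + (k%:R)^-1 * (\sum_(i in I) nat_of_ord (c (z i)))%:R.

(* Main.v *)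
Require Import Defs.
From HB Require Import structures.
From mathcomp Require Import all_boot all_order all_algebra.
From mathcomp Require Import zify ring lra.
Import Order.TTheory GRing.Theory Num.Theory.

Lemma wcost_mod (V : finType) (e : rel V) (k : nat) (c : V -> 'I_k) v w cst :
  is_coloring V e k c -> (0 < k)%N -> wcost V e k v w cst ->
  (cst + c v = c w %[mod k])%N.
Proof.
move=> Hc k0; elim=> {v w cst} [v|u v w cst Euv _ IH|u v w cst Evu _ IH] //.
- rewrite -IH (Hc _ _ Euv) modnDmr; congr (_ %% _)%N; lia.
- have := Hc _ _ Evu => Hu.
  rewrite Hu modnDmr -IH.
  have -> : (k.-1 + cst + (c v + 1) = 1 * k + (cst + c v))%N by lia.
  by rewrite modnMDl.
Qed.

Lemma min_sum_attained (V : finType) (F : V -> nat) (x0 : V) :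
  exists x, \big[minn/ (\max_(y : V) F y)%N]_(y : V) F y = F x.
Proof.
apply: (big_ind (fun m => exists x, m = F x)).
- have [i Hi] := @bigop.eq_bigmax V F (ltac:(by apply/card_gt0P; exists x0) : (0 < #|V|)%N).
  by exists i.
- move=> a b [xa ->] [xb ->]; rewrite /minn; case: ifP => _; eauto.
- move=> i _; eauto.
Qed.

Lemma sum_setU1 n (W : 'I_n -> nat) (a : 'I_n) (S : {set 'I_n}) :
  a \notin S -> (\sum_(i in a |: S) W i = W a + \sum_(i in S) W i)%N.
Proof. by move=> aS; rewrite big_setU1. Qed.

Section Shift.
Local Open Scope ring_scope.
Lemma mat2_shift (x y w t : rat) :
  min_attained_twice (x + t) (y + t) (w + t) = min_attained_twice x y w.
Proof.
rewrite /min_attained_twice.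
have E : Num.min (x + t) (Num.min (y + t) (w + t)) = Num.min x (Num.min y w) + t.
  by rewrite /Num.min !ltrD2r; case: (ltP y w) => _; rewrite ltrD2r; case: ifP.
by rewrite E !(inj_eq (addIr t)).
Qed.
End Shift.

Lemma ne_of_lt {n} {x y : 'I_n} : (x < y)%N -> x != y.
Proof. by move=> xy; apply/eqP => E; move: xy; rewrite E ltnn. Qed.

Lemma W2 n (W : 'I_n -> nat) (a b : 'I_n) (S : {set 'I_n}) : a != b -> a \notin S -> b \notin S ->
  (\sum_(i in a |: (b |: S)) W i = W a + W b + \sum_(i in S) W i)%N.
Proof.
move=> ab aS bS; rewrite sum_setU1 ?sum_setU1 ?addnA //.
by rewrite !inE negb_or ab.
Qed.

Section Pair.
Local Open Scope ring_scope.
Lemma pair_shift n (k : nat) (p : {set 'I_n} -> rat) (W : 'I_n -> nat) (S : {set 'I_n}) (x y u v : 'I_n) :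
  x != y -> u != v -> x \notin S -> y \notin S -> u \notin S -> v \notin S ->
  p (x |: (y |: S)) + (k%:R)^-1 * (\sum_(i in x |: (y |: S)) W i)%N%:R +
  (p (u |: (v |: S)) + (k%:R)^-1 * (\sum_(i in u |: (v |: S)) W i)%N%:R) =
  p (x |: (y |: S)) + p (u |: (v |: S)) +
  (k%:R)^-1 * (W x + W y + W u + W v + \sum_(i in S) W i + \sum_(i in S) W i)%N%:R.
Proof.
move=> xy uv xS yS uS vS; rewrite !W2 // !natrD; ring.
Qed.
End Pair.

Section Integral.
Local Open Scope ring_scope.
Lemma integral_part (V : finType) (e : rel V) (k n : nat) (z : 'I_n -> V)
  (d : V -> V -> nat) (p : {set 'I_n} -> rat) (c : V -> 'I_k) :
  is_dir_dist V e k d ->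
  (forall I : {set 'I_n}, #|I| = k -> p I = trop_plucker V k n d z I) ->
  is_coloring V e k c ->
  forall I : {set 'I_n}, #|I| = k -> modified_plucker V k n z p c I \is a Num.int.
Proof.
move=> Hd Hp Hc.
move=> I HI; rewrite /modified_plucker (Hp I HI) /trop_plucker /min_sum.
  case: (posnP k) => [k0|k0].
    by rewrite (_ : k%:R = 0 :> rat) ?k0 // invr0 !(mul0r, oppr0, add0r).
  have [i0 i0I] : exists i0, i0 \in I by apply/card_gt0P; rewrite HI.
  have [x ->] := @min_sum_attained V (fun y => \sum_(i in I) d y (z i))%N (z i0).
  set m := (\sum_(i in I) d x (z i))%N.
  set s := (\sum_(i in I) nat_of_ord (c (z i)))%N.
  have Hms : (m %% k = s %% k)%N.
    have E1 : (\sum_(i in I) (d x (z i) + c x) = m + k * c x)%N.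
      by rewrite big_split /= sum_nat_const HI.
    have : ((m + k * c x) %% k = s %% k)%N.
      rewrite -E1 -[LHS]modn_summ -[RHS]modn_summ; congr (_ %% _)%N.
      apply: eq_bigr => i _; apply: (@wcost_mod V e k c) => //.
      exact: (Hd x (z i)).1.
    by rewrite addnC mulnC modnMDl.
  rewrite [s](divn_eq s k) [m](divn_eq m k) Hms.
  have kne : (k%:R : rat) != 0 by rewrite pnatr_eq0 -lt0n.
  have -> : - (k%:R)^-1 * ((m %/ k) * k + s %% k)%N%:R + (k%:R)^-1 * ((s %/ k) * k + s %% k)%N%:R
     = (s %/ k)%N%:R - (m %/ k)%N%:R :> rat.
    by rewrite !natrD !natrM; field.
  by rewrite rpredB // natr_int.
Qed.
End Integral.

Theorem proposition3p11 (V : finType) (e : rel V) (k n : nat) (z : 'I_n -> V)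
  (d : V -> V -> nat) (p : {set 'I_n} -> rat) (c : V -> 'I_k) :
  weak_scaffold V e k n z d p c ->
  in_Dr_Z k n (modified_plucker V k n z p c).
Proof.
move=> [_ [Hd [_ [Hp [Hdr Hc]]]]].
split.
- move=> S a b cc dd HS ab bc cd aS bS cS dS.
  rewrite /modified_plucker.
  have ab' := ne_of_lt ab; have bc' := ne_of_lt bc; have cd' := ne_of_lt cd.
  have ac' := ne_of_lt (ltn_trans ab bc); have bd' := ne_of_lt (ltn_trans bc cd).
  have ad' := ne_of_lt (ltn_trans ab (ltn_trans bc cd)).
  set W := fun i => nat_of_ord (c (z i)).
  rewrite !(pair_shift _ _ _ W) //.
  set T := (\sum_(i in S) W i)%N.
  have -> : (W a + W cc + W b + W dd + T + T = W a + W b + W cc + W dd + T + T)%N by lia.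
  have -> : (W a + W dd + W b + W cc + T + T = W a + W b + W cc + W dd + T + T)%N by lia.
  by rewrite !mat2_shift; apply: Hdr.
- exact: integral_part Hd Hp Hc.
Qed.
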